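(* Let $N_1,N_2$ be continuous fuzzy negations and $U_1,U_2$ disjunctive uninorms with neutral elements $e_1,e_2\in\,]0,1[$ respectively, and suppose $U_1(N_1(x),y)=U_2(N_2(x),y)$ for all $x,y\in[0,1]$. If $e_1\neq e_2$ or $N_1\neq N_2$ or $U_1\neq U_2$, then: (i) $e_1\neq e_2$, $N_1\neq N_2$ and $U_1\neq U_2$; (ii) the function $f_1:[0,1]\to[0,1]$, $f_1(x)=U_1(x,e_2)$, is continuous and non-decreasing with $f_1(0)=0$ and $f_1(1)=1$; (iii) the function $f_2:[0,1]\to[0,1]$, $f_2(x)=U_2(x,e_1)$, is continuous and non-decreasing with $f_2(0)=0$ and $f_2(1)=1$.
   Context: A fuzzy negation is a non-increasing map $N:[0,1]\to[0,1]$ with $N(0)=1$, $N(1)=0$. A uninorm is a map $U:[0,1]^2\to[0,1]$ that is commutative, associative, non-decreasing in each variable, and has a neutral element $e\in[0,1]$. A uninorm is disjunctive if $U(1,0)=1$. *)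

(* Defs.v *)
(* functions R -> R on an abstract R : realType,
   only their behaviour on [0,1] matters. *)
From HB Require Import structures.
From mathcomp Require Import all_boot all_order all_algebra.
From mathcomp Require Import all_classical all_reals topology normedtype.
Set Implicit Arguments. Unset Strict Implicit. Unset Printing Implicit Defensive.
Import Order.TTheory GRing.Theory Num.Theory.
Import numFieldNormedType.Exports.
Local Open Scope classical_set_scope.
Local Open Scope ring_scope.

Section Fuzzy.
Variable R : realType.

Definition in01 (x : R) : Prop := 0 <= x <= 1.

Definition fuzzy_negation (N : R -> R) : Prop :=
  [/\ (forall x, in01 x -> in01 (N x)),
      N 0 = 1, N 1 = 0 &
      (forall x y, in01 x -> in01 y -> x <= y -> N y <= N x)].

Definition uninorm (U : R -> R -> R) (e : R) : Prop :=
  in01 e /\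
  (forall x y1 y2, in01 x -> in01 y1 -> in01 y2 -> y1 <= y2 -> U x y1 <= U x y2) /\
  [/\ (forall x y, in01 x -> in01 y -> in01 (U x y)),
      (forall x y, in01 x -> in01 y -> U x y = U y x),
      (forall x y z, in01 x -> in01 y -> in01 z -> U x (U y z) = U (U x y) z),
      (forall x1 x2 y, in01 x1 -> in01 x2 -> in01 y -> x1 <= x2 -> U x1 y <= U x2 y) &
      (forall x, in01 x -> U e x = x)].

Definition disjunctive (U : R -> R -> R) : Prop := U 1 0 = 1.

Definition neq01 (f g : R -> R) : Prop := exists x, in01 x /\ f x <> g x.
Definition neq01_2 (U V : R -> R -> R) : Prop :=
  exists x y, [/\ in01 x, in01 y & U x y <> V x y].

Definition nondecreasing01 (f : R -> R) : Prop :=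
  forall x y, in01 x -> in01 y -> x <= y -> f x <= f y.

Definition continuous01 (f : R -> R) : Prop :=
  {within `[0%R, 1%R], continuous f}.

End Fuzzy.

(* Main.v *)
Require Import Defs.
From HB Require Import structures.
From mathcomp Require Import all_boot all_order all_algebra.
From mathcomp Require Import all_classical all_reals topology normedtype realfun.
From mathcomp Require Import lra.
Import Order.TTheory GRing.Theory Num.Theory.
Import numFieldNormedType.Exports.
Local Open Scope ring_scope.
Local Open Scope classical_set_scope.

Lemma mono_cont (R : realType) (f : R -> R) : (forall t, in01 t -> in01 (f t)) ->
  nondecreasing01 f -> (forall v, in01 v -> exists2 s, in01 s & f s = v) -> continuous01 f.
Proof.
move=> fin fmono fsurj.
apply/subspace_continuousP => x /=; rewrite in_itv /= => x01.
apply/cvgrPdist_lt => eps eps0.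
have [d1 d10 Hd1] : exists2 d, 0 < d & forall t, in01 t -> x - d < t -> t <= x -> f x - f t < eps.
  have fx01 := fin x x01; move: (fx01) => /andP[fx0 fx1].
  case: (ltP (f x) eps) => hfx.
    exists 1 => // t t01 _ tx.
    have /andP[ft0 _] := fin t t01. lra.
  have v01 : in01 (f x - eps / 2) by apply/andP; split; lra.
  have [s s01 fs] := fsurj _ v01.
  have sx : s < x.
    case: (ltP s x) => // xs.
    have := fmono _ _ x01 s01 xs. lra.
  exists (x - s); first lra.
  move=> t t01 st tx.
  have st' : s <= t by lra.
  have := fmono _ _ s01 t01 st'; lra.
have [d2 d20 Hd2] : exists2 d, 0 < d & forall t, in01 t -> t < x + d -> x <= t -> f t - f x < eps.
  have fx01 := fin x x01; move: (fx01) => /andP[fx0 fx1].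
  case: (ltP (1 - eps) (f x)) => hfx.
    exists 1 => // t t01 _ tx.
    have /andP[_ ft1] := fin t t01. lra.
  have v01 : in01 (f x + eps / 2) by apply/andP; split; lra.
  have [s s01 fs] := fsurj _ v01.
  have sx : x < s.
    case: (ltP x s) => // xs.
    have := fmono _ _ s01 x01 xs. lra.
  exists (s - x); first lra.
  move=> t t01 st tx.
  have st' : t <= s by lra.
  have := fmono _ _ t01 s01 st'; lra.
rewrite /within /=; apply/nbhs_ballP; exists (Num.min d1 d2) => /=; first by rewrite lt_min d10 d20.
move=> t; rewrite /ball /= lt_min => /andP[h1 h2]; rewrite in_itv /= => t01.
rewrite /= ltr_norml.
have n1 := ler_norm (x - t); have n2 := ler_norm (t - x); rewrite distrC in n2.
change (- eps < f x - f t < eps).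
case: (lerP t x) => htx.
  have := fmono _ _ t01 x01 htx; have := Hd1 t t01; lra.
have := fmono _ _ x01 t01 (ltW htx); have := Hd2 t t01; lra.
Qed.

Lemma in01_0 (R : realType) : in01 (0 : R).
Proof. by rewrite /in01 lexx ler01. Qed.
Lemma in01_1 (R : realType) : in01 (1 : R).
Proof. by rewrite /in01 lexx ler01. Qed.

Lemma neg_surj {R : realType} {N : R -> R} : fuzzy_negation N -> continuous01 N ->
  forall v, in01 v -> exists2 s, in01 s & N s = v.
Proof.
move=> [_ N0 N1 _] cN v v01.
have [|c c01 Nc] := @IVT R N 0 1 v (@ler01 R) cN.
  rewrite N0 N1 /Num.min /Num.max ltr10 /=; exact: v01.
by exists c => //; move: c01; rewrite in_itv.
Qed.

Theorem mainTheorem3 (R : realType) (N1 N2 : R -> R) (U1 U2 : R -> R -> R)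
  (e1 e2 : R) :
  fuzzy_negation N1 -> continuous01 N1 ->
  fuzzy_negation N2 -> continuous01 N2 ->
  uninorm U1 e1 -> disjunctive U1 -> 0 < e1 < 1 ->
  uninorm U2 e2 -> disjunctive U2 -> 0 < e2 < 1 ->
  (forall x y, in01 x -> in01 y -> U1 (N1 x) y = U2 (N2 x) y) ->
  (e1 <> e2 \/ neq01 N1 N2 \/ neq01_2 U1 U2) ->
  [/\ e1 <> e2 /\ neq01 N1 N2 /\ neq01_2 U1 U2,
      continuous01 (fun x => U1 x e2) /\ nondecreasing01 (fun x => U1 x e2)
        /\ U1 0 e2 = 0 /\ U1 1 e2 = 1 &
      continuous01 (fun x => U2 x e1) /\ nondecreasing01 (fun x => U2 x e1)
        /\ U2 0 e1 = 0 /\ U2 1 e1 = 1].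
Proof.
move=> fN1 cN1 fN2 cN2 u1 _ _ u2 _ _ H hyp.
case: u1 => e1in [mono1r [in1 com1 ass1 mono1l neu1]].
case: u2 => e2in [mono2r [in2 com2 ass2 mono2l neu2]].
have sN1 := neg_surj fN1 cN1; have sN2 := neg_surj fN2 cN2.
case: (fN1) => N1in N10 N11 _; case: (fN2) => N2in N20 N21 _.
have A1 : forall x, in01 x -> U1 (N1 x) e1 = N1 x.
  by move=> x x01; rewrite com1 ?neu1 //; apply: N1in.
have B1 : forall x, in01 x -> U1 (N1 x) e2 = N2 x.
  by move=> x x01; rewrite H // com2 ?neu2 //; apply: N2in.
have B2 : forall x, in01 x -> U2 (N2 x) e1 = N1 x.
  by move=> x x01; rewrite -H // A1.
have UU : (forall a b, in01 a -> in01 b -> U1 a b = U2 a b) -> e1 = e2.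
  by move=> h; rewrite -[e2](neu1 e2 e2in) h // com2 // neu2.
have NU : (forall x, in01 x -> N1 x = N2 x) ->
    forall a b, in01 a -> in01 b -> U1 a b = U2 a b.
  by move=> h a b a01 b01; have [x x01 <-] := sN1 a a01; rewrite H // h.
have E : e1 <> e2.
  move=> E.
  have hN : forall x, in01 x -> N1 x = N2 x.
    by move=> x x01; rewrite -B1 // -E A1.
  case: hyp => [//|[[x [x01 ne]]|[a [b [a01 b01 ne]]]]].
    by apply: ne; apply: hN.
  by apply: ne; apply: NU.
have nN : neq01 N1 N2.
  case: (pselect (neq01 N1 N2)) => // nN; exfalso; apply: E; apply: UU; apply: NU.
  move=> x x01; case: (eqVneq (N1 x) (N2 x)) => // /eqP ne.
  by exfalso; apply: nN; exists x.
have nU : neq01_2 U1 U2.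
  case: (pselect (neq01_2 U1 U2)) => // nU; exfalso; apply: E; apply: UU.
  move=> a b a01 b01; case: (eqVneq (U1 a b) (U2 a b)) => // /eqP ne.
  by exfalso; apply: nU; exists a, b.
split.
- by [].
- split; [|split; [|split]].
  + apply: mono_cont.
    * by move=> t t01; apply: in1.
    * by move=> x y x01 y01 xy; apply: mono1l.
    * move=> v v01; have [x x01 <-] := sN2 v v01.
      by exists (N1 x); [apply: N1in | apply: B1].
  + by move=> x y x01 y01 xy; apply: mono1l.
  + have h := B1 1 (in01_1 R); rewrite N11 N21 in h; exact: h.
  + have h := B1 0 (in01_0 R); rewrite N10 N20 in h; exact: h.
- split; [|split; [|split]].
  + apply: mono_cont.
    * by move=> t t01; apply: in2.
    * by move=> x y x01 y01 xy; apply: mono2l.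
    * move=> v v01; have [x x01 <-] := sN1 v v01.
      by exists (N2 x); [apply: N2in | apply: B2].
  + by move=> x y x01 y01 xy; apply: mono2l.
  + have h := B2 1 (in01_1 R); rewrite N11 N21 in h; exact: h.
  + have h := B2 0 (in01_0 R); rewrite N10 N20 in h; exact: h.
Qed.
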